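(* Let $G$ be a graph with a type-2A 1-planar drawing $D$, and let $X$ and $Y$ be two distinct vertex subsets of $G$. Let $G'$ be the graph obtained from $G$ by removing every edge of $E_G(X,Y)$ that crosses (in $D$) some edge with both endvertices in $X$. If $D$ is nice, then $N_{G'}(X,Y)=N_G(X,Y)$.
   Context: All drawings are good (no edge crosses itself, two edges cross at most once, adjacent edges do not cross). A drawing is 1-planar if every edge is crossed at most once. If edges $ab$ and $cd$ cross in a 1-planar drawing of $G$, the associated edges of this crossing are the edges of $G[\{a,b,c,d\}]$ other than $ab$ and $cd$. A 1-planar drawing is type-2A if every crossing has at least two associated edges, and every crossing with exactly two associated edges has these two edges disjoint. A 1-planar drawing is nice if for every pair of crossing edges, all of their associated edges are uncrossed. For vertex sets $V_1,V_2$, $E_G(V_1,V_2)$ is the set of edges of $G$ with one endvertex in $V_1$ and the other in $V_2$, and $N_G(V_1,V_2)=\{v\in V_2: v \text{ is adjacent in } G \text{ to some vertex of } V_1\}$. *)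

(* Defs.v *)
From mathcomp Require Import all_boot.
Set Implicit Arguments. Unset Strict Implicit. Unset Printing Implicit Defensive.

Definition simple_graph (T : finType) (e : rel T) : Prop :=
  symmetric e /\ irreflexive e.

Definition edges (T : finType) (e : rel T) : {set {set T}} :=
  [set [set u; v] | u in T, v in T & e u v].

(* Combinatorial crossing data of a drawing: cr f g means edges f and g
   cross.  A good drawing: cr is symmetric, relates only edges, and crossing
   edges are disjoint (no self-crossing, adjacent edges do not cross);
   "two edges cross at most once" is built in since cr is a relation. *)
Definition good_drawing (T : finType) (e : rel T) (cr : rel {set T}) : Prop :=
  [/\ forall f g, cr f g = cr g f,
      forall f g, cr f g -> (f \in edges e) && (g \in edges e)
    & forall f g, cr f g -> [disjoint f & g]].

Definition one_planar (T : finType) (cr : rel {set T}) : Prop :=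
  forall f g h, cr f g -> cr f h -> g = h.

Definition assoc (T : finType) (e : rel T) (f g : {set T}) : {set {set T}} :=
  [set h in edges e | (h \subset f :|: g) && (h != f) && (h != g)].

Definition type2A (T : finType) (e : rel T) (cr : rel {set T}) : Prop :=
  forall f g, cr f g ->
    2 <= #|assoc e f g| /\
    (#|assoc e f g| = 2 ->
       forall h1 h2, h1 \in assoc e f g -> h2 \in assoc e f g -> h1 != h2 ->
         [disjoint h1 & h2]).

Definition nice (T : finType) (e : rel T) (cr : rel {set T}) : Prop :=
  forall f g, cr f g -> forall h, h \in assoc e f g -> forall k, ~~ cr h k.

Definition nbhd (T : finType) (e : rel T) (V1 V2 : {set T}) : {set T} :=
  [set v in V2 | [exists u in V1, e u v]].

Definition remove_XY_cross (T : finType) (e : rel T) (cr : rel {set T})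
    (X Y : {set T}) : rel T :=
  fun u v => e u v &&
    ~~ ((((u \in X) && (v \in Y)) || ((u \in Y) && (v \in X))) &&
        [exists g : {set T}, cr [set u; v] g && (g \subset X)]).

(* Main.v *)
Require Import Defs.
From mathcomp Require Import all_boot.

Lemma edgesP (T : finType) (e : rel T) (h : {set T}) :
  h \in edges e -> exists x y, e x y /\ h = [set x; y].
Proof. by case/imset2P => x y _; rewrite inE => exy ->; exists x, y. Qed.

Lemma key (T : finType) (e : rel T) (u v a b : T) :
  symmetric e -> irreflexive e -> e u v -> e a b ->
  [disjoint [set u; v] & [set a; b]] ->
  (2 <= #|assoc e [set u; v] [set a; b]| /\
    (#|assoc e [set u; v] [set a; b]| = 2 ->
       forall h1 h2, h1 \in assoc e [set u; v] [set a; b] ->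
         h2 \in assoc e [set u; v] [set a; b] -> h1 != h2 ->
         [disjoint h1 & h2])) ->
  e a v || e b v.
Proof.
move=> esym eirr euv eab dis [c2 cd].
apply/negPn/negP; rewrite negb_or => /andP[nav nbv].
have nva : ~~ e v a by rewrite esym.
have nvb : ~~ e v b by rewrite esym.
have ua : u != a.
  by apply/eqP => E; have := disjointFr dis (set21 u v); rewrite E set21.
have ub : u != b.
  by apply/eqP => E; have := disjointFr dis (set21 u v); rewrite E set22.
have ab : a != b by apply/eqP => E; rewrite E eirr in eab.
have uab : [set u; a] != [set u; b].
  apply/eqP => E; have : b \in [set u; a] by rewrite E set22.
  by rewrite !inE eq_sym (negbTE ub) eq_sym (negbTE ab).
have sub : assoc e [set u; v] [set a; b] \subset [set [set u; a]; [set u; b]].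
  apply/subsetP => h; rewrite inE => /andP[hE /andP[/andP[hsub h1] h2]].
  case: (@edgesP _ _ _ hE) => x [y [exy Eh]]; subst h.
  have hx := subsetP hsub x (set21 x y).
  have hy := subsetP hsub y (set22 x y).
  rewrite !inE in hx hy.
  move: exy h1 h2; clear hsub hE.
  case/orP: hx => [/orP[]|/orP[]] /eqP ->; case/orP: hy => [/orP[]|/orP[]] /eqP -> => exy h1 h2;
  first [ by rewrite eqxx in h1 | by rewrite setUC eqxx in h1
        | by rewrite eqxx in h2 | by rewrite setUC eqxx in h2
        | by apply/set2P; left; apply/setP=>z; rewrite !inE; first [done | by rewrite orbC]
        | by apply/set2P; right; apply/setP=>z; rewrite !inE; first [done | by rewrite orbC]
        | by rewrite eirr in exy
        | by rewrite (negbTE nav) in exy | by rewrite (negbTE nbv) in exy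
        | by rewrite (negbTE nva) in exy | by rewrite (negbTE nvb) in exy ].
have c2' : #|assoc e [set u; v] [set a; b]| = 2.
  apply/eqP; rewrite eqn_leq c2 andbT.
  by rewrite -[2]/((true : nat).+1) -uab -cards2 subset_leq_card.
have E2 : #|assoc e [set u; v] [set a; b]| = #|[set [set u; a]; [set u; b]]|.
  by rewrite c2' cards2 uab.
have eqs := subset_cardP E2 sub.
have := cd c2' _ _ _ _ uab.
rewrite !eqs !inE !eqxx ?orbT => /(_ isT isT) d.
by have := disjointFr d (set21 u a); rewrite set21.
Qed.

Theorem lemma9 (T : finType) (e : rel T) (cr : rel {set T}) (X Y : {set T}) :
  simple_graph e -> good_drawing e cr -> one_planar cr -> type2A e cr ->
  X != Y -> nice e cr ->
  nbhd (remove_XY_cross e cr X Y) X Y = nbhd e X Y.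
Proof.
move=> [esym eirr] [crsym cre crdis] _ t2 _ nic.
apply/setP => v; rewrite !inE; case: (v \in Y) => //=.
apply/existsP/existsP.
  by case=> u /andP[uX /andP[euv _]]; exists u; rewrite uX euv.
case=> u /andP[uX euv].
case R: [exists g, cr [set u; v] g && (g \subset X)]; last first.
  by exists u; rewrite uX /remove_XY_cross euv R andbF.
case/existsP: R => g /andP[cg gX].
have /andP[_ gE] := cre _ _ cg.
case: (@edgesP _ _ _ gE) => a [b [eab Eg]]; subst g.
have dis := crdis _ _ cg.
have := key _ _ _ _ _ _ esym eirr euv eab dis (t2 _ _ cg).
have vab : v \in [set a; b] = false by apply: (disjointFr dis); rewrite set22.
have good : forall w, w \in [set a; b] -> e w v ->
    exists u0, (u0 \in X) && remove_XY_cross e cr X Y u0 v.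
  move=> w wab ewv; exists w.
  have wuv : w \in [set u; v] = false by apply: (disjointFl dis).
  have nc : forall k, ~~ cr [set w; v] k.
    apply: (nic _ _ cg).
    rewrite inE; apply/andP; split.
      by apply/imset2P; exists w v => //; rewrite inE.
    apply/andP; split; first (apply/andP; split).
    - apply/subsetP => z; rewrite !inE => /orP[] /eqP ->.
        by rewrite !inE in wab; rewrite wab orbT.
      by rewrite eqxx orbT.
    - apply/negP => /eqP E; have : w \in [set u; v] by rewrite -E set21.
      by rewrite wuv.
    - apply/negP => /eqP E; have : v \in [set a; b] by rewrite -E set22.
      by rewrite vab.
  rewrite (subsetP gX _ wab) /remove_XY_cross ewv /=.
  apply/negP => /andP[_ /existsP [k /andP[ck _]]].
  by have := nc k; rewrite ck.
by case/orP => [eav|ebv]; [apply: (good a) | apply: (good b)]; rewrite ?set21 ?set22.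
Qed.
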